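(* Let $p,q\geq1$ be integers, $\alpha_0=\arctan\sqrt{q/p}$ and $P_1=(\alpha_0,\alpha_0+\pi)$. Let $(\vartheta(s),\alpha(s))$ be a trajectory of the differential system $$\dot\vartheta=3\sin\vartheta\cos\vartheta\sin(\alpha-\vartheta),\qquad \dot\alpha=q\cos\alpha\cos\vartheta-p\sin\alpha\sin\vartheta,$$ and suppose that for some $s_0$ one has $0<\vartheta(s_0)<\pi/2$ and $\vartheta(s_0)+\pi/2\leq\alpha(s_0)\leq\vartheta(s_0)+3\pi/2$. Then $\lim_{s\to-\infty}(\vartheta(s),\alpha(s))=P_1$. *)

(* Defs.v *)
From Stdlib Require Import Reals.
From Coquelicot Require Import Coquelicot.
Open Scope R_scope.

Definition alpha0 (p q : nat) : R := atan (sqrt (INR q / INR p)).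

Definition theta_rhs (th al : R) : R := 3 * sin th * cos th * sin (al - th).
Definition alpha_rhs (p q : nat) (th al : R) : R :=
  INR q * cos al * cos th - INR p * sin al * sin th.

(* Main.v *)
Require Import Defs.
From Stdlib Require Import Reals Lra Lia Psatz.
From Coquelicot Require Import Coquelicot.
Open Scope R_scope.

Lemma cont_lim (f g : R -> R) (l : R) :
  continuity_pt f l -> is_lim g m_infty l -> is_lim (fun x => f (g x)) m_infty (f l).
Proof.
  intros Hc Hg. unfold is_lim in *. eapply filterlim_comp; [exact Hg|].
  apply continuity_pt_filterlim; exact Hc.
Qed.

Lemma der_sin f x df : is_derive f x df -> is_derive (fun t => sin (f t)) x (cos (f x) * df).
Proof. intros H. replace (cos (f x) * df) with (scal df (cos (f x))).
  apply (is_derive_comp sin f). apply is_derive_sin. exact H.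
  unfold scal; simpl; unfold mult; simpl; ring. Qed.

Lemma der_cos f x df : is_derive f x df -> is_derive (fun t => cos (f t)) x (- sin (f x) * df).
Proof. intros H. replace (- sin (f x) * df) with (scal df (- sin (f x))).
  apply (is_derive_comp cos f). apply is_derive_cos. exact H.
  unfold scal; simpl; unfold mult; simpl; ring. Qed.

Lemma der_mult f g x df dg : is_derive f x df -> is_derive g x dg ->
  is_derive (fun t => f t * g t) x (df * g x + f x * dg).
Proof. intros H1 H2. apply (is_derive_mult f g x df dg H1 H2). intros; apply Rmult_comm. Qed.

Lemma der_minus f g x df dg : is_derive f x df -> is_derive g x dg ->
  is_derive (fun t => f t - g t) x (df - dg).
Proof. intros H1 H2. apply (is_derive_minus f g x df dg H1 H2). Qed.

Lemma der_plus f g x df dg : is_derive f x df -> is_derive g x dg ->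
  is_derive (fun t => f t + g t) x (df + dg).
Proof. intros H1 H2. apply (is_derive_plus f g x df dg H1 H2). Qed.

Lemma der_exp f x df : is_derive f x df -> is_derive (fun t => exp (f t)) x (exp (f x) * df).
Proof. intros H. replace (exp (f x) * df) with (scal df (exp (f x))).
  apply (is_derive_comp exp f). apply is_derive_exp. exact H.
  unfold scal; simpl; unfold mult; simpl; ring. Qed.

Lemma der_id x : is_derive (fun t => t) x 1.
Proof. apply (is_derive_id x). Qed.

Lemma mono_lb (f f' : R -> R) (a b m : R) :
  (forall x, a <= x <= b -> is_derive f x (f' x)) ->
  (forall x, a <= x <= b -> m <= f' x) -> a <= b -> m * (b - a) <= f b - f a.
Proof.
  intros Hd Hm Hab. destruct (Req_dec a b) as [->|Hne].
  - lra.
  - destruct (MVT_cor2 f f' a b) as [c [Hc1 Hc2]]. lra.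
    intros c Hc. apply is_derive_Reals. apply Hd; lra.
    rewrite Hc1. apply Rmult_le_compat_r. lra. apply Hm; lra.
Qed.

Lemma der_cont f df : (forall x, is_derive f x (df x)) -> continuity f.
Proof. intros H x. apply continuity_pt_filterlim. apply (ex_derive_continuous f x).
  exists (df x). apply H. Qed.

Lemma prod_bound a b : -1 <= a <= 1 -> -1 <= b <= 1 -> -1 <= a * b <= 1.
Proof. intros. split; nra. Qed.

Lemma is_derive_eq (f : R -> R) (x l l' : R) : is_derive f x l -> l = l' -> is_derive f x l'.
Proof. intros H ->; exact H. Qed.

Lemma th_range (th al : R -> R)
  (Hth : forall s, is_derive th s (theta_rhs (th s) (al s)))
  (s0 : R) (H1 : 0 < th s0 < PI / 2) : forall s, 0 < th s < PI / 2.
Proof.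
  pose (u := fun t => (sin (th t) * cos (th t)) * (sin (th t) * cos (th t))).
  pose (k := fun t => (cos (th t) ^ 2 - sin (th t) ^ 2) * sin (al t - th t)).
  assert (Hk : forall t, -1 <= k t <= 1).
  { intro t. unfold k. apply prod_bound; [|apply SIN_bound].
    pose proof (sin2_cos2 (th t)) as E. unfold Rsqr in E. split; nra. }
  assert (Hu : forall x, is_derive u x (6 * u x * k x)).
  { intro x. unfold u, k. eapply is_derive_eq.
    apply (der_mult (fun t => sin (th t) * cos (th t)) (fun t => sin (th t) * cos (th t)));
    apply (der_mult (fun t => sin (th t)) (fun t => cos (th t))).
    apply der_sin; apply Hth. apply der_cos; apply Hth.
    apply der_sin; apply Hth. apply der_cos; apply Hth.
    unfold theta_rhs. simpl. ring. }
  assert (Hupos : forall x, 0 <= u x). { intro x; unfold u; apply Rle_0_sqr. }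
  assert (Hu0 : 0 < u s0).
  { unfold u. assert (0 < sin (th s0)) by (apply sin_gt_0; lra).
    assert (0 < cos (th s0)) by (apply cos_gt_0; lra).
    assert (0 < sin (th s0) * cos (th s0)) by (apply Rmult_lt_0_compat; lra).
    apply Rmult_lt_0_compat; lra. }
  assert (Hpos : forall s, 0 < u s).
  { intro s. destruct (Hupos s) as [h|h]; [exact h|exfalso].
    destruct (Rle_dec s0 s) as [Hle|Hle].
    - pose (G := fun t => u t * exp (6 * t)).
      assert (HG := mono_lb G (fun t => 6 * u t * exp (6 * t) * (k t + 1)) s0 s 0).
      assert (0 * (s - s0) <= G s - G s0).
      { apply HG; [|intros x _|exact Hle].
        - intros x _. unfold G. eapply is_derive_eq.
          apply (der_mult u (fun t => exp (6 * t))). apply Hu.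
          apply (der_exp (fun t => 6 * t)). apply (is_derive_scal (fun t => t)). apply der_id.
          ring.
        - pose proof (Hk x). pose proof (Hupos x). pose proof (exp_pos (6*x)).
          assert (0 <= u x * exp (6*x)) by (apply Rmult_le_pos; lra).
          replace (6 * u x * exp (6 * x) * (k x + 1)) with (6 * (u x * exp (6*x)) * (k x + 1)) by ring.
          apply Rmult_le_pos; lra. }
      unfold G in H. rewrite <- h in H. pose proof (exp_pos (6*s0)).
      assert (0 < u s0 * exp (6*s0)) by (apply Rmult_lt_0_compat; lra). lra.
    - pose (G := fun t => - (u t * exp (- 6 * t))).
      assert (HG := mono_lb G (fun t => 6 * u t * exp (- 6 * t) * (1 - k t)) s s0 0).
      assert (0 * (s0 - s) <= G s0 - G s).
      { apply HG; [|intros x _|lra].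
        - intros x _. unfold G. eapply is_derive_eq.
          apply (is_derive_opp (fun t => u t * exp (-6 * t))).
          apply (der_mult u (fun t => exp (-6 * t))). apply Hu.
          apply (der_exp (fun t => -6 * t)). apply (is_derive_scal (fun t => t)). apply der_id.
          unfold opp; simpl. ring.
        - pose proof (Hk x). pose proof (Hupos x). pose proof (exp_pos (-6*x)).
          assert (0 <= u x * exp (-6*x)) by (apply Rmult_le_pos; lra).
          replace (6 * u x * exp (-6 * x) * (1 - k x)) with (6 * (u x * exp (-6*x)) * (1 - k x)) by ring.
          apply Rmult_le_pos; lra. }
      unfold G in H. rewrite <- h in H. pose proof (exp_pos (-6*s0)).
      assert (0 < u s0 * exp (-6*s0)) by (apply Rmult_lt_0_compat; lra). lra. }
  assert (Hc : continuity th) by (apply (der_cont th (fun s => theta_rhs (th s) (al s))); exact Hth).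
  intro s.
  destruct (Rlt_dec 0 (th s)) as [Ha|Ha]; destruct (Rlt_dec (th s) (PI/2)) as [Hb|Hb];
    try (split; assumption).
  - destruct (IVT_gen th s s0 (PI/2) Hc) as [t [_ Ht]].
    { unfold Rmin, Rmax; destruct Rle_dec; lra. }
    specialize (Hpos t). unfold u in Hpos. rewrite Ht, cos_PI2 in Hpos. lra.
  - destruct (IVT_gen th s s0 0 Hc) as [t [_ Ht]].
    { unfold Rmin, Rmax; destruct Rle_dec; lra. }
    specialize (Hpos t). unfold u in Hpos. rewrite Ht, sin_0 in Hpos. lra.
  - exfalso. pose proof PI_RGT_0. lra.
Qed.

Lemma beta_rhs p q th al :
  alpha_rhs p q th al - theta_rhs th al =
  cos (al - th) * (INR q * cos th ^ 2 - INR p * sin th ^ 2)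
  - (INR p + INR q + 3) * sin th * cos th * sin (al - th).
Proof.
  unfold alpha_rhs, theta_rhs.
  set (b := al - th).
  replace al with (th + b) by (unfold b; ring).
  rewrite cos_plus, sin_plus. ring.
Qed.

Definition Hf p q (th al : R -> R) t := cos (th t) ^ p * sin (th t) ^ q * cos (al t - th t) ^ 3.

Lemma b_deriv p q (th al : R -> R)
  (Hth : forall s, is_derive th s (theta_rhs (th s) (al s)))
  (Hal : forall s, is_derive al s (alpha_rhs p q (th s) (al s))) x :
  is_derive (fun t => al t - th t) x
   (cos (al x - th x) * (INR q * cos (th x) ^ 2 - INR p * sin (th x) ^ 2)
  - (INR p + INR q + 3) * sin (th x) * cos (th x) * sin (al x - th x)).
Proof. rewrite <- beta_rhs. apply der_minus; auto. Qed.

Lemma H_deriv p q (hp : (1 <= p)%nat) (hq : (1 <= q)%nat) (th al : R -> R)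
  (Hth : forall s, is_derive th s (theta_rhs (th s) (al s)))
  (Hal : forall s, is_derive al s (alpha_rhs p q (th s) (al s))) x :
  is_derive (Hf p q th al) x
    (3 * (INR p + INR q + 3) * (cos (th x) ^ p * cos (th x)) * (sin (th x) ^ q * sin (th x))
       * cos (al x - th x) ^ 2 * sin (al x - th x) ^ 2).
Proof.
  destruct p as [|p1]; [lia|]. destruct q as [|q1]; [lia|].
  unfold Hf. eapply is_derive_eq.
  apply (der_mult (fun t => cos (th t) ^ S p1 * sin (th t) ^ S q1) (fun t => cos (al t - th t) ^ 3)).
  apply (der_mult (fun t => cos (th t) ^ S p1) (fun t => sin (th t) ^ S q1)).
  apply (is_derive_pow (fun t => cos (th t))). apply der_cos, Hth.
  apply (is_derive_pow (fun t => sin (th t))). apply der_sin, Hth.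
  apply (is_derive_pow (fun t => cos (al t - th t))). apply (der_cos (fun t => al t - th t)).
  apply (b_deriv (S p1) (S q1)); auto.
  unfold theta_rhs. cbn [pow Nat.pred]. match goal with |- ?a = ?b => change (@eq R a b) end. replace (INR 3) with 3 by (simpl; ring). ring.
Qed.

Lemma pos_facts (th : R -> R) (thr : forall s, 0 < th s < PI / 2) s :
  0 < cos (th s) /\ 0 < sin (th s) /\ cos (th s) <= 1 /\ sin (th s) <= 1.
Proof.
  specialize (thr s). split; [apply cos_gt_0; lra|]. split; [apply sin_gt_0; lra|].
  split; [apply COS_bound|apply SIN_bound].
Qed.

Lemma H_mono p q (hp : (1 <= p)%nat) (hq : (1 <= q)%nat) (th al : R -> R)
  (Hth : forall s, is_derive th s (theta_rhs (th s) (al s)))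
  (Hal : forall s, is_derive al s (alpha_rhs p q (th s) (al s)))
  (thr : forall s, 0 < th s < PI / 2) a b : a <= b -> Hf p q th al a <= Hf p q th al b.
Proof.
  intros Hab.
  assert (H := mono_lb (Hf p q th al) _ a b 0 (fun x _ => H_deriv p q hp hq th al Hth Hal x)).
  cut (0 * (b - a) <= Hf p q th al b - Hf p q th al a). lra.
  apply H; [|exact Hab]. intros x _.
  destruct (pos_facts th thr x) as [Hc [Hs _]].
  pose proof (pos_INR p). pose proof (pos_INR q).
  cbv beta.
  apply Rmult_le_pos; [|apply pow2_ge_0]. apply Rmult_le_pos; [|apply pow2_ge_0].
  apply Rmult_le_pos; [|apply Rmult_le_pos; [apply pow_le|]; lra].
  apply Rmult_le_pos; [|apply Rmult_le_pos; [apply pow_le|]; lra]. lra.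
Qed.

Lemma cube_neg x : x ^ 3 <= 0 -> x <= 0.
Proof. intros H. destruct (Rle_dec x 0); auto. exfalso.
  assert (0 < x ^ 3) by (apply pow_lt; lra). lra. Qed.

Lemma Hf_cos p q th al (thr : forall s, 0 < th s < PI / 2) s :
  Hf p q th al s <= 0 -> cos (al s - th s) <= 0.
Proof.
  intros H. unfold Hf in H. apply cube_neg.
  destruct (pos_facts th thr s) as [Hc [Hs _]].
  assert (A : 0 < cos (th s) ^ p * sin (th s) ^ q) by (apply Rmult_lt_0_compat; apply pow_lt; lra).
  destruct (Rle_dec (cos (al s - th s) ^ 3) 0); auto. exfalso.
  assert (0 < cos (th s) ^ p * sin (th s) ^ q * cos (al s - th s) ^ 3) by (apply Rmult_lt_0_compat; lra).
  lra.
Qed.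

Lemma region p q (hp : (1 <= p)%nat) (hq : (1 <= q)%nat) (th al : R -> R)
  (Hth : forall s, is_derive th s (theta_rhs (th s) (al s)))
  (Hal : forall s, is_derive al s (alpha_rhs p q (th s) (al s)))
  (thr : forall s, 0 < th s < PI / 2) s0
  (H2 : th s0 + PI / 2 <= al s0 <= th s0 + 3 * PI / 2) :
  Hf p q th al s0 <= 0 /\
  forall s, s <= s0 -> PI / 2 <= al s - th s <= 3 * PI / 2.
Proof.
  assert (H0 : Hf p q th al s0 <= 0).
  { unfold Hf. destruct (pos_facts th thr s0) as [Hc [Hs _]].
    assert (cos (al s0 - th s0) <= 0) by (apply cos_le_0; lra).
    assert (0 < cos (th s0) ^ p * sin (th s0) ^ q) by (apply Rmult_lt_0_compat; apply pow_lt; lra).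
    assert (0 <= - cos (al s0 - th s0) ^ 3).
    { replace (- cos (al s0 - th s0) ^ 3) with ((- cos (al s0 - th s0)) ^ 3) by ring.
      apply pow_le; lra. }
    nra. }
  split; [exact H0|].
  assert (Hcn : forall s, s <= s0 -> cos (al s - th s) <= 0).
  { intros s Hs. apply (Hf_cos p q th al thr). pose proof (H_mono p q hp hq th al Hth Hal thr s s0 Hs). lra. }
  assert (Hcb : continuity (fun t => al t - th t)).
  { apply (der_cont _ _ (b_deriv p q th al Hth Hal)). }
  pose proof PI_RGT_0 as HPI.
  intros s Hs. split.
  - destruct (Rle_dec (PI/2) (al s - th s)) as [h|h]; [exact h|exfalso].
    destruct (Rle_dec (al s - th s) (- (PI/2))) as [h2|h2].
    + destruct (IVT_gen _ s s0 0 Hcb) as [t [Ht Ht2]].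
      { unfold Rmin, Rmax; destruct Rle_dec; lra. }
      assert (t <= s0) by (unfold Rmin, Rmax in Ht; destruct Rle_dec; lra).
      specialize (Hcn t H). rewrite Ht2, cos_0 in Hcn. lra.
    + assert (0 < cos (al s - th s)) by (apply cos_gt_0; lra). specialize (Hcn s Hs). lra.
  - destruct (Rle_dec (al s - th s) (3 * PI/2)) as [h|h]; [exact h|exfalso].
    destruct (Rle_dec (5 * PI / 2) (al s - th s)) as [h2|h2].
    + destruct (IVT_gen _ s s0 (2*PI) Hcb) as [t [Ht Ht2]].
      { unfold Rmin, Rmax; destruct Rle_dec; lra. }
      assert (t <= s0) by (unfold Rmin, Rmax in Ht; destruct Rle_dec; lra).
      specialize (Hcn t H). rewrite Ht2, cos_2PI in Hcn. lra.
    + assert (0 < cos (al s - th s - 2 * PI)) by (apply cos_gt_0; lra).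
      pose proof (cos_period (al s - th s - 2 * PI) 1) as E.
      replace (al s - th s - 2 * PI + 2 * INR 1 * PI) with (al s - th s) in E by (simpl; ring).
      specialize (Hcn s Hs). lra.
Qed.

Lemma exists_s1 p q (hp : (1 <= p)%nat) (hq : (1 <= q)%nat) (th al : R -> R)
  (Hth : forall s, is_derive th s (theta_rhs (th s) (al s)))
  (Hal : forall s, is_derive al s (alpha_rhs p q (th s) (al s)))
  (thr : forall s, 0 < th s < PI / 2) s0 (H0 : Hf p q th al s0 <= 0) :
  exists s1, s1 <= s0 /\ Hf p q th al s1 < 0.
Proof.
  destruct (Classical_Prop.classic (exists s1, s1 <= s0 /\ Hf p q th al s1 < 0)) as [h|h]; [exact h|exfalso].
  assert (Hz : forall s, s <= s0 -> cos (al s - th s) = 0).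
  { intros s Hs.
    assert (Hle : Hf p q th al s <= 0) by (pose proof (H_mono p q hp hq th al Hth Hal thr s s0 Hs); lra).
    assert (Hge : 0 <= Hf p q th al s).
    { destruct (Rle_dec 0 (Hf p q th al s)); auto. exfalso; apply h. exists s; split; lra. }
    assert (E : Hf p q th al s = 0) by lra. unfold Hf in E.
    destruct (pos_facts th thr s) as [Hc [Hs' _]].
    apply Rmult_integral in E. destruct E as [E|E].
    - exfalso. apply Rmult_integral in E. destruct E as [E|E];
      [pose proof (pow_lt _ p Hc)|pose proof (pow_lt _ q Hs')]; lra.
    - destruct (Req_dec (cos (al s - th s)) 0) as [e|e]; auto.
      exfalso; apply (pow_nonzero _ 3 e); exact E. }
  set (x := s0 - 1).
  assert (D1 := der_cos _ x _ (b_deriv p q th al Hth Hal x)).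
  assert (D2 : is_derive (fun t => cos (al t - th t)) x 0).
  { apply (is_derive_ext_loc (fun _ => 0)).
    exists (mkposreal 1 Rlt_0_1). intros y Hy.
    unfold ball in Hy; simpl in Hy; unfold AbsRing_ball, abs, minus, plus, opp in Hy; simpl in Hy.
    apply Rabs_lt_between' in Hy. rewrite Hz. reflexivity. unfold x in Hy; lra.
    apply (is_derive_const 0). }
  apply is_derive_unique in D1. apply is_derive_unique in D2. rewrite D1 in D2.
  rewrite (Hz x) in D2 by (unfold x; lra).
  pose proof (sin2_cos2 (al x - th x)) as E. rewrite (Hz x) in E by (unfold x; lra).
  unfold Rsqr in E.
  destruct (pos_facts th thr x) as [Hc [Hs _]].
  pose proof (pos_INR p). pose proof (pos_INR q).
  assert (0 < (INR p + INR q + 3) * (sin (th x) * cos (th x))).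
  { apply Rmult_lt_0_compat. lra. apply Rmult_lt_0_compat; lra. }
  assert (EQ : - sin (al x - th x) *
     (0 * (INR q * cos (th x) ^ 2 - INR p * sin (th x) ^ 2) -
      (INR p + INR q + 3) * sin (th x) * cos (th x) * sin (al x - th x))
     = (INR p + INR q + 3) * (sin (th x) * cos (th x)) * (sin (al x - th x) * sin (al x - th x))) by ring.
  rewrite EQ in D2. assert (E' : sin (al x - th x) * sin (al x - th x) = 1) by lra. rewrite E' in D2. lra.
Qed.

Lemma powle1 x n : 0 <= x <= 1 -> 0 <= x ^ n <= 1.
Proof. intros H. induction n; simpl. lra. split. apply Rmult_le_pos; lra.
  rewrite <- (Rmult_1_r 1). apply Rmult_le_compat; lra. Qed.

Lemma sq_le x n : 0 <= x <= 1 -> (1 <= n)%nat -> x ^ n * x ^ n <= x ^ n * x.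
Proof. intros H Hn. destruct n as [|n]; [lia|].
  pose proof (powle1 x n H). pose proof (powle1 x (S n) H).
  apply Rmult_le_compat_l; [lra|]. simpl.
  assert (x * x ^ n <= x * 1) by (apply Rmult_le_compat_l; lra). lra. Qed.

Lemma Hdot_lb p q (hp : (1 <= p)%nat) (hq : (1 <= q)%nat) (th al : R -> R)
  (thr : forall s, 0 < th s < PI / 2) x :
  3 * (INR p + INR q + 3) * Hf p q th al x ^ 2 * sin (al x - th x) ^ 2 <=
  3 * (INR p + INR q + 3) * (cos (th x) ^ p * cos (th x)) * (sin (th x) ^ q * sin (th x))
       * cos (al x - th x) ^ 2 * sin (al x - th x) ^ 2.
Proof.
  destruct (pos_facts th thr x) as [Hc [Hs [Hc1 Hs1]]].
  pose proof (pos_INR p). pose proof (pos_INR q).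
  unfold Hf.
  set (A := cos (th x)) in *. set (B := sin (th x)) in *. set (C := cos (al x - th x)) in *. set (Sb := sin (al x - th x)) in *.
  assert (hA := sq_le A p (conj (Rlt_le _ _ Hc) Hc1) hp).
  assert (hB := sq_le B q (conj (Rlt_le _ _ Hs) Hs1) hq).
  assert (hC : C ^ 3 * C ^ 3 <= C ^ 2).
  { pose proof (COS_bound (al x - th x)). fold C in H1.
    assert (0 <= C^2 <= 1) by (split; [apply pow2_ge_0| simpl; nra]).
    replace (C^3 * C^3) with (C^2 * (C^2 * C^2)) by ring.
    replace (C^2) with (C^2 * 1) at 4 by ring. apply Rmult_le_compat_l; [lra|].
    replace 1 with (1*1) by ring. apply Rmult_le_compat; lra. }
  replace (3 * (INR p + INR q + 3) * (A ^ p * B ^ q * C ^ 3) ^ 2 * Sb ^ 2) with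
    (3 * (INR p + INR q + 3) * Sb ^ 2 * ((A ^ p * A ^ p) * (B ^ q * B ^ q) * (C^3 * C^3))) by ring.
  replace (3 * (INR p + INR q + 3) * (A ^ p * A) * (B ^ q * B) * C ^ 2 * Sb ^ 2) with
    (3 * (INR p + INR q + 3) * Sb ^ 2 * ((A ^ p * A) * (B ^ q * B) * C ^ 2)) by ring.
  apply Rmult_le_compat_l. apply Rmult_le_pos; [lra|apply pow2_ge_0].
  assert (0 <= A ^ p) by (apply pow_le; lra). assert (0 <= B ^ q) by (apply pow_le; lra).
  apply Rmult_le_compat; try lra.
  - apply Rmult_le_pos; apply Rmult_le_pos; lra.
  - replace (C ^ 3 * C ^ 3) with ((C^3)^2) by ring. apply pow2_ge_0.
  - apply Rmult_le_compat; try lra; apply Rmult_le_pos; lra.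
Qed.

Lemma cauchy_minf (f : R -> R) :
  (forall a b, a <= b -> f a <= f b) -> (forall s, -1 <= f s) ->
  forall eps, 0 < eps -> exists T, forall a b, a <= b <= T -> f b - f a < eps.
Proof.
  intros Hm Hb eps He.
  destruct (completeness (fun y => exists s, y = - f s)) as [m [Hub Hlub]].
  { exists 1. intros y [s ->]. specialize (Hb s). lra. }
  { exists (- f 0), 0. reflexivity. }
  destruct (Classical_Prop.classic (exists s, m - eps < - f s)) as [[s Hs]|Hn].
  - exists s. intros a b [Hab Hbs].
    assert (- f a <= m) by (apply Hub; exists a; reflexivity).
    pose proof (Hm b s Hbs). lra.
  - exfalso. assert (m <= m - eps); [|lra]. apply Hlub. intros y [s ->].
    destruct (Rle_dec (- f s) (m - eps)); auto. exfalso; apply Hn; exists s; lra.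
Qed.

Lemma bd_gen P Q c s cb sb : 0 <= P -> 0 <= Q -> 0 <= c <= 1 -> 0 <= s <= 1 ->
  -1 <= cb <= 1 -> -1 <= sb <= 1 ->
  Rabs (cb * (Q * c ^ 2 - P * s ^ 2) - (P + Q + 3) * s * c * sb) <= 2 * P + 2 * Q + 3.
Proof.
  intros HP HQ Hc Hs Hcb Hsb.
  assert (X1 : -P <= Q * c ^ 2 - P * s ^ 2 <= Q).
  { assert (0 <= c^2 <= 1) by (simpl; split; nra). assert (0 <= s^2 <= 1) by (simpl; split; nra). split; nra. }
  assert (Y1 : 0 <= s * c <= 1) by (split; nra).
  eapply Rle_trans. apply Rabs_triang. rewrite Rabs_Ropp. rewrite Rabs_mult.
  replace ((P + Q + 3) * s * c * sb) with ((P + Q + 3) * (s * c) * sb) by ring.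
  rewrite (Rabs_mult ((P + Q + 3) * (s * c)) sb).
  assert (Rabs cb <= 1) by (apply Rabs_le; lra).
  assert (Rabs sb <= 1) by (apply Rabs_le; lra).
  assert (Rabs (Q * c ^ 2 - P * s ^ 2) <= P + Q) by (apply Rabs_le; lra).
  assert (Rabs ((P + Q + 3) * (s * c)) <= P + Q + 3).
  { rewrite Rabs_mult. rewrite (Rabs_right (P+Q+3)) by lra. rewrite Rabs_right by lra. nra. }
  assert (Rabs cb * Rabs (Q * c ^ 2 - P * s ^ 2) <= 1 * (P + Q)).
  { apply Rmult_le_compat; try apply Rabs_pos; lra. }
  assert (Rabs ((P + Q + 3) * (s * c)) * Rabs sb <= (P + Q + 3) * 1).
  { apply Rmult_le_compat; try apply Rabs_pos; lra. }
  lra.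
Qed.

Definition bp p q (th al : R -> R) x := cos (al x - th x) * (INR q * cos (th x) ^ 2 - INR p * sin (th x) ^ 2)
  - (INR p + INR q + 3) * sin (th x) * cos (th x) * sin (al x - th x).

Lemma bp_bound p q th al (thr : forall s, 0 < th s < PI / 2) x :
  Rabs (bp p q th al x) <= 2 * INR p + 2 * INR q + 3.
Proof.
  destruct (pos_facts th thr x) as [Hc [Hs [Hc1 Hs1]]].
  apply bd_gen; try apply pos_INR; try lra; try apply COS_bound; try apply SIN_bound.
Qed.

Lemma Hf_lb p q th al (thr : forall s, 0 < th s < PI / 2) x : -1 <= Hf p q th al x.
Proof.
  destruct (pos_facts th thr x) as [Hc [Hs [Hc1 Hs1]]]. unfold Hf.
  assert (hA := powle1 (cos (th x)) p (conj (Rlt_le _ _ Hc) Hc1)).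
  assert (hB := powle1 (sin (th x)) q (conj (Rlt_le _ _ Hs) Hs1)).
  pose proof (COS_bound (al x - th x)).
  assert (-1 <= cos (al x - th x) ^ 3 <= 1) by (simpl; split; nra).
  assert (0 <= cos (th x) ^ p * sin (th x) ^ q <= 1) by (split; nra).
  nra.
Qed.

Lemma sin2_to0 p q (hp : (1 <= p)%nat) (hq : (1 <= q)%nat) (th al : R -> R)
  (Hth : forall s, is_derive th s (theta_rhs (th s) (al s)))
  (Hal : forall s, is_derive al s (alpha_rhs p q (th s) (al s)))
  (thr : forall s, 0 < th s < PI / 2) s1 (Hs1 : Hf p q th al s1 < 0) :
  forall eps, 0 < eps -> exists T, forall t, t <= T -> sin (al t - th t) ^ 2 < eps.
Proof.
  intros eps He.
  pose proof (pos_INR p) as HP. pose proof (pos_INR q) as HQ.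
  set (C := 2 * (2 * INR p + 2 * INR q + 3)).
  set (K := 3 * (INR p + INR q + 3)).
  set (d := - Hf p q th al s1).
  assert (HC : 0 < C) by (unfold C; lra). assert (HK : 0 < K) by (unfold K; lra).
  assert (Hd : 0 < d) by (unfold d; lra).
  set (w := eps / (2 * C)).
  assert (Hw : 0 < w) by (unfold w; apply Rdiv_lt_0_compat; lra).
  assert (HCw : C * w = eps / 2) by (unfold w; field; lra).
  set (eta := K * d ^ 2 * (eps / 2) * w).
  assert (Heta : 0 < eta) by (unfold eta; apply Rmult_lt_0_compat; [|exact Hw];
    apply Rmult_lt_0_compat; [|lra]; apply Rmult_lt_0_compat; [lra|apply pow_lt; lra]).
  destruct (cauchy_minf (Hf p q th al) (H_mono p q hp hq th al Hth Hal thr) (Hf_lb p q th al thr) eta Heta)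
    as [T HT].
  exists (Rmin T s1). intros t Ht.
  assert (Ht1 : t <= T) by (pose proof (Rmin_l T s1); lra).
  assert (Ht2 : t <= s1) by (pose proof (Rmin_r T s1); lra).
  destruct (Rlt_dec (sin (al t - th t) ^ 2) eps) as [h|h]; [exact h|exfalso].
  assert (Hsq : forall u, t - w <= u <= t -> eps / 2 <= sin (al u - th u) ^ 2).
  { intros u Hu.
    assert (M := mono_lb (fun v => - sin (al v - th v) ^ 2)
       (fun v => - (INR 2 * (cos (al v - th v) * bp p q th al v) * sin (al v - th v) ^ Nat.pred 2)) u t (- C)).
    assert (- C * (t - u) <= (- sin (al t - th t) ^ 2) - (- sin (al u - th u) ^ 2)).
    { apply M; [| |lra].
      - intros x _. apply (is_derive_opp (fun v => sin (al v - th v) ^ 2)).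
        apply (is_derive_pow (fun v => sin (al v - th v))). apply (der_sin (fun v => al v - th v)).
        unfold bp. apply b_deriv; auto.
      - intros x _. pose proof (bp_bound p q th al thr x).
        cbn [Nat.pred pow]. replace (INR 2) with 2 by (simpl; ring).
        pose proof (COS_bound (al x - th x)). pose proof (SIN_bound (al x - th x)).
        assert (Rabs (cos (al x - th x) * sin (al x - th x)) <= 1).
        { rewrite Rabs_mult. rewrite <- (Rmult_1_r 1).
          apply Rmult_le_compat; try apply Rabs_pos; apply Rabs_le; lra. }
        assert (HB2 : Rabs (cos (al x - th x) * sin (al x - th x) * bp p q th al x) <= 2 * INR p + 2 * INR q + 3).
        { rewrite Rabs_mult. rewrite <- (Rmult_1_l (2 * INR p + 2 * INR q + 3)).
          apply Rmult_le_compat; try apply Rabs_pos; lra. }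
        pose proof (Rle_abs (cos (al x - th x) * sin (al x - th x) * bp p q th al x)). unfold C.
        replace (- (2 * (cos (al x - th x) * bp p q th al x) * sin (al x - th x)))
          with (- 2 * (cos (al x - th x) * sin (al x - th x) * bp p q th al x)) by ring.
        lra. }
    assert (C * (t - u) <= C * w) by (apply Rmult_le_compat_l; lra).
    lra. }
  assert (M := mono_lb (Hf p q th al) _ (t - w) t (K * d ^ 2 * (eps / 2))
     (fun x _ => H_deriv p q hp hq th al Hth Hal x)).
  assert (K * d ^ 2 * (eps / 2) * (t - (t - w)) <= Hf p q th al t - Hf p q th al (t - w)).
  { apply M; [|lra]. intros x Hx. cbv beta.
    eapply Rle_trans; [|apply (Hdot_lb p q hp hq th al thr x)]. fold K.
    assert (Hx1 : Hf p q th al x <= - d).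
    { unfold d. rewrite Ropp_involutive. apply H_mono; auto; lra. }
    assert (d ^ 2 <= Hf p q th al x ^ 2) by (simpl; nra).
    specialize (Hsq x Hx).
    assert (0 <= d ^ 2) by apply pow2_ge_0.
    assert (d ^ 2 * (eps / 2) <= Hf p q th al x ^ 2 * sin (al x - th x) ^ 2) by (apply Rmult_le_compat; lra).
    replace (K * d ^ 2 * (eps / 2)) with (K * (d ^ 2 * (eps / 2))) by ring.
    replace (K * Hf p q th al x ^ 2 * sin (al x - th x) ^ 2) with (K * (Hf p q th al x ^ 2 * sin (al x - th x) ^ 2)) by ring.
    apply Rmult_le_compat_l; lra. }
  specialize (HT (t - w) t ltac:(lra)).
  replace (t - (t - w)) with w in H by ring. unfold eta in HT. lra.
Qed.

Definition Df p q (th : R -> R) v := INR q * cos (th v) ^ 2 - INR p * sin (th v) ^ 2.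

Lemma Df_deriv p q (th al : R -> R)
  (Hth : forall s, is_derive th s (theta_rhs (th s) (al s))) x :
  is_derive (Df p q th) x (- 6 * (INR p + INR q) * (sin (th x) * cos (th x)) ^ 2 * sin (al x - th x)).
Proof.
  unfold Df. eapply is_derive_eq.
  apply (der_minus (fun v => INR q * cos (th v) ^ 2) (fun v => INR p * sin (th v) ^ 2));
  apply (is_derive_scal (fun v => _ (th v) ^ 2)); apply (is_derive_pow (fun v => _ (th v)));
  [apply der_cos|apply der_sin]; apply Hth.
  unfold theta_rhs. cbn [pow Nat.pred]. replace (INR 2) with 2 by (simpl; ring). ring.
Qed.

Lemma small_sin x eta : 0 < eta -> x ^ 2 < eta ^ 2 -> Rabs x < eta.
Proof. intros He H. destruct (Rlt_dec (Rabs x) eta); auto. exfalso.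
  assert (x ^ 2 = Rabs x ^ 2) by (simpl; rewrite !Rmult_1_r; rewrite <- Rabs_mult; rewrite Rabs_right; [ring|]; nra).
  assert (eta ^ 2 <= Rabs x ^ 2) by (simpl; nra). lra. Qed.

Lemma D_to0 p q (hp : (1 <= p)%nat) (hq : (1 <= q)%nat) (th al : R -> R)
  (Hth : forall s, is_derive th s (theta_rhs (th s) (al s)))
  (Hal : forall s, is_derive al s (alpha_rhs p q (th s) (al s)))
  (thr : forall s, 0 < th s < PI / 2) s1 (Hs1 : Hf p q th al s1 < 0) :
  forall eps, 0 < eps -> exists T, forall a, a <= T -> Rabs (Df p q th a) < eps.
Proof.
  intros eps He.
  pose proof (pos_INR p) as HP. pose proof (pos_INR q) as HQ.
  set (eta := Rmin (1/2) (eps / (16 * (INR p + INR q + 3)))).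
  assert (He1 : eta <= 1/2) by apply Rmin_l.
  assert (He2 : eta <= eps / (16 * (INR p + INR q + 3))) by apply Rmin_r.
  assert (Hepos : 0 < eta).
  { unfold eta. apply Rmin_pos. lra. apply Rdiv_lt_0_compat; lra. }
  assert (He3 : (INR p + INR q + 3) * eta <= eps / 16).
  { replace (eps / 16) with ((INR p + INR q + 3) * (eps / (16 * (INR p + INR q + 3)))) by (field; lra).
    apply Rmult_le_compat_l; lra. }
  assert (He4 : eta <= eps / 16).
  { assert (1 * eta <= (INR p + INR q + 3) * eta) by (apply Rmult_le_compat_r; lra). lra. }
  destruct (sin2_to0 p q hp hq th al Hth Hal thr s1 Hs1 (eta ^ 2) ltac:(apply pow_lt; lra)) as [T0 HT0].
  exists (T0 - 1). intros a Ha.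
  assert (Hsm : forall u, u <= T0 -> Rabs (sin (al u - th u)) < eta).
  { intros u Hu. apply small_sin; auto. }
  destruct (Rlt_dec (Rabs (Df p q th a)) eps) as [h|h]; [exact h|exfalso].
  assert (Hsig : exists sg, (sg = 1 \/ sg = -1) /\ eps <= sg * Df p q th a).
  { destruct (Rle_dec 0 (Df p q th a)).
    - exists 1. split; auto. rewrite Rabs_right in h; lra.
    - exists (-1). split; auto. rewrite Rabs_left in h; lra. }
  destruct Hsig as [sg [Hsg HDa]].
  assert (Hsga : Rabs sg = 1) by (destruct Hsg as [->| ->]; unfold Rabs; destruct Rcase_abs; lra).
  assert (HDu : forall u, a <= u <= a + 1 -> eps / 2 <= sg * Df p q th u).
  { intros u Hu.
    assert (M := mono_lb (fun v => sg * Df p q th v)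
      (fun v => sg * (- 6 * (INR p + INR q) * (sin (th v) * cos (th v)) ^ 2 * sin (al v - th v)))
      a u (- (6 * (INR p + INR q) * eta))).
    assert (- (6 * (INR p + INR q) * eta) * (u - a) <= sg * Df p q th u - sg * Df p q th a).
    { apply M; [| |lra].
      - intros x _. apply is_derive_scal. apply Df_deriv; auto.
      - intros x Hx. destruct (pos_facts th thr x) as [Hc [Hs [Hc1 Hs1']]].
        assert (Hsc : 0 <= (sin (th x) * cos (th x)) ^ 2 <= 1).
        { split. apply pow2_ge_0. simpl. rewrite Rmult_1_r.
          assert (0 <= sin (th x) * cos (th x) <= 1) by (split; nra). nra. }
        set (y := sg * (- 6 * (INR p + INR q) * (sin (th x) * cos (th x)) ^ 2 * sin (al x - th x))).
        assert (Rabs y <= 6 * (INR p + INR q) * eta).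
        { unfold y. rewrite !Rabs_mult, Hsga.
          replace (Rabs (-6)) with 6 by (unfold Rabs; destruct Rcase_abs; lra).
          rewrite (Rabs_right (INR p + INR q)) by lra.
          rewrite (Rabs_right (_ ^ 2)) by lra.
          specialize (Hsm x ltac:(lra)).
          assert ((sin (th x) * cos (th x)) ^ 2 * Rabs (sin (al x - th x)) <= 1 * eta).
          { apply Rmult_le_compat; try lra; apply Rabs_pos. }
          assert (0 <= 6 * (INR p + INR q)) by lra.
          replace (1 * (6 * (INR p + INR q) * (sin (th x) * cos (th x)) ^ 2 * Rabs (sin (al x - th x))))
            with (6 * (INR p + INR q) * ((sin (th x) * cos (th x)) ^ 2 * Rabs (sin (al x - th x)))) by ring.
          apply Rmult_le_compat_l; lra. }
        pose proof (Rle_abs (- y)) as HY. rewrite Rabs_Ropp in HY. lra. }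
    assert (6 * (INR p + INR q) * eta <= eps / 2).
    { assert (6 * (INR p + INR q) * eta <= 8 * (INR p + INR q + 3) * eta).
      { apply Rmult_le_compat_r; lra. } lra. }
    assert ((6 * (INR p + INR q) * eta) * (u - a) <= 6 * (INR p + INR q) * eta * 1).
    { apply Rmult_le_compat_l; [|lra]. apply Rmult_le_pos; lra. }
    lra. }
  assert (M := mono_lb (fun v => sg * sin (al v - th v))
     (fun v => sg * (cos (al v - th v) * bp p q th al v)) a (a + 1) (eps / 8)).
  assert (eps / 8 * (a + 1 - a) <= sg * sin (al (a + 1) - th (a + 1)) - sg * sin (al a - th a)).
  { apply M; [| |lra].
    - intros x _. apply is_derive_scal. apply (der_sin (fun v => al v - th v)). apply b_deriv; auto.
    - intros x Hx. destruct (pos_facts th thr x) as [Hc [Hs [Hc1 Hs1']]].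
      specialize (Hsm x ltac:(lra)). specialize (HDu x Hx).
      assert (E : sg * (cos (al x - th x) * bp p q th al x) =
        cos (al x - th x) ^ 2 * (sg * Df p q th x)
        - sg * (INR p + INR q + 3) * (sin (th x) * cos (th x)) * (sin (al x - th x) * cos (al x - th x))).
      { unfold bp, Df. ring. }
      rewrite E.
      pose proof (sin2_cos2 (al x - th x)) as S2. unfold Rsqr in S2.
      assert (Hs2 : sin (al x - th x) ^ 2 < eta ^ 2) by (apply HT0; lra).
      assert (Hc2 : 3 / 4 <= cos (al x - th x) ^ 2).
      { simpl in Hs2 |- *. rewrite Rmult_1_r in *. assert (eta * eta <= 1/4) by nra. lra. }
      assert (3 / 4 * (eps / 2) <= cos (al x - th x) ^ 2 * (sg * Df p q th x)).
      { apply Rmult_le_compat; lra. }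
      set (z := sg * (INR p + INR q + 3) * (sin (th x) * cos (th x)) * (sin (al x - th x) * cos (al x - th x))).
      assert (Rabs z <= (INR p + INR q + 3) * eta).
      { unfold z. rewrite !Rabs_mult, Hsga. rewrite (Rabs_right (INR p + INR q + 3)) by lra.
        assert (Rabs (sin (th x)) * Rabs (cos (th x)) <= 1 * 1).
        { rewrite (Rabs_right (sin _)) by lra. rewrite (Rabs_right (cos _)) by lra.
          apply Rmult_le_compat; lra. }
        assert (Rabs (sin (al x - th x)) * Rabs (cos (al x - th x)) <= eta * 1).
        { apply Rmult_le_compat; try apply Rabs_pos; try lra.
          apply Rabs_le; apply COS_bound. }
        assert (Rabs (sin (th x)) * Rabs (cos (th x)) * (Rabs (sin (al x - th x)) * Rabs (cos (al x - th x))) <= 1 * eta).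
        { apply Rmult_le_compat; try lra; apply Rmult_le_pos; apply Rabs_pos. }
        replace (1 * (INR p + INR q + 3) * (Rabs (sin (th x)) * Rabs (cos (th x))) *
          (Rabs (sin (al x - th x)) * Rabs (cos (al x - th x)))) with
          ((INR p + INR q + 3) * (Rabs (sin (th x)) * Rabs (cos (th x)) * (Rabs (sin (al x - th x)) * Rabs (cos (al x - th x))))) by ring.
        apply Rmult_le_compat_l; lra. }
      pose proof (Rle_abs z). lra. }
  assert (A1 := Hsm (a + 1) ltac:(lra)). assert (A2 := Hsm a ltac:(lra)).
  assert (Rabs (sg * sin (al (a + 1) - th (a + 1)) - sg * sin (al a - th a)) < 2 * eta).
  { replace (sg * sin (al (a + 1) - th (a + 1)) - sg * sin (al a - th a)) with
      (sg * (sin (al (a + 1) - th (a + 1)) - sin (al a - th a))) by ring.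
    rewrite Rabs_mult, Hsga, Rmult_1_l.
    eapply Rle_lt_trans. apply Rabs_triang. rewrite Rabs_Ropp. lra. }
  pose proof (Rle_abs (sg * sin (al (a + 1) - th (a + 1)) - sg * sin (al a - th a))). lra.
Qed.

Lemma alpha0_asin p q (hp : (1 <= p)%nat) (hq : (1 <= q)%nat) :
  alpha0 p q = asin (sqrt (INR q / (INR p + INR q))).
Proof.
  assert (HP : 0 < INR p) by (apply lt_0_INR; lia).
  assert (HQ : 0 < INR q) by (apply lt_0_INR; lia).
  unfold alpha0. rewrite <- (asin_sin (atan (sqrt (INR q / INR p)))).
  2:{ pose proof (atan_bound (sqrt (INR q / INR p))). lra. }
  f_equal. rewrite sin_atan. rewrite Rsqr_sqrt by (apply Rlt_le, Rdiv_lt_0_compat; lra).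
  rewrite <- sqrt_div. f_equal. field. split; lra.
  apply Rlt_le, Rdiv_lt_0_compat; lra.
  assert (0 < INR q / INR p) by (apply Rdiv_lt_0_compat; lra). lra.
Qed.

Theorem lemma4p11 (p q : nat) (hp : (1 <= p)%nat) (hq : (1 <= q)%nat)
  (th al : R -> R)
  (Hth : forall s, is_derive th s (theta_rhs (th s) (al s)))
  (Hal : forall s, is_derive al s (alpha_rhs p q (th s) (al s)))
  (s0 : R)
  (H1 : 0 < th s0 < PI / 2)
  (H2 : th s0 + PI / 2 <= al s0 <= th s0 + 3 * PI / 2) :
  is_lim th m_infty (alpha0 p q) /\ is_lim al m_infty (alpha0 p q + PI).
Proof.
  pose proof (th_range th al Hth s0 H1) as thr.
  destruct (region p q hp hq th al Hth Hal thr s0 H2) as [H0 Hreg].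
  destruct (exists_s1 p q hp hq th al Hth Hal thr s0 H0) as [s1 [Hs1a Hs1]].
  assert (HP : 0 < INR p) by (apply lt_0_INR; lia).
  assert (HQ : 0 < INR q) by (apply lt_0_INR; lia).
  set (l := INR q / (INR p + INR q)).
  assert (Hl : 0 < l < 1).
  { unfold l. split. apply Rdiv_lt_0_compat; lra.
    apply (Rmult_lt_reg_r (INR p + INR q)). lra. field_simplify; lra. }
  assert (Ls : is_lim (fun s => sin (th s) ^ 2) m_infty l).
  { apply is_lim_spec. intros eps.
    destruct (D_to0 p q hp hq th al Hth Hal thr s1 Hs1 (eps * (INR p + INR q))) as [T HT].
    { apply Rmult_lt_0_compat. apply cond_pos. lra. }
    exists T. intros y Hy. specialize (HT y (Rlt_le _ _ Hy)).
    assert (E : sin (th y) ^ 2 - l = - Df p q th y / (INR p + INR q)).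
    { unfold Df, l. pose proof (sin2_cos2 (th y)) as S2. unfold Rsqr in S2.
      replace (cos (th y) ^ 2) with (1 - sin (th y) ^ 2) by (simpl; lra). field. lra. }
    rewrite E. unfold Rdiv. rewrite Rabs_mult, Rabs_Ropp, Rabs_inv, (Rabs_right (INR p + INR q)) by lra.
    apply (Rmult_lt_reg_r (INR p + INR q)). lra.
    replace (Rabs (Df p q th y) * / (INR p + INR q) * (INR p + INR q)) with (Rabs (Df p q th y)) by (field; lra).
    exact HT. }
  assert (Lth : is_lim th m_infty (alpha0 p q)).
  { rewrite alpha0_asin by auto. fold l.
    apply (is_lim_ext (fun s => asin (sqrt (sin (th s) ^ 2)))).
    { intro y. destruct (pos_facts th thr y) as [Hc [Hs _]]. rewrite sqrt_pow2 by lra.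
      apply asin_sin. specialize (thr y). lra. }
    apply (cont_lim (fun x => asin (sqrt x))); [|exact Ls].
    apply (continuity_pt_comp sqrt asin). apply continuity_pt_sqrt; lra.
    apply derivable_continuous_pt. apply derivable_pt_asin.
    assert (sqrt l < sqrt 1) by (apply sqrt_lt_1_alt; lra). rewrite sqrt_1 in H.
    pose proof (sqrt_lt_R0 l (proj1 Hl)). lra. }
  assert (Lsb : is_lim (fun s => sin (al s - th s)) m_infty 0).
  { apply is_lim_spec. intros eps.
    destruct (sin2_to0 p q hp hq th al Hth Hal thr s1 Hs1 (eps ^ 2)) as [T HT].
    { apply pow_lt. apply cond_pos. }
    exists T. intros y Hy. rewrite Rminus_0_r. apply small_sin. apply cond_pos. apply HT; lra. }
  assert (Lb : is_lim (fun s => al s - th s) m_infty PI).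
  { apply (is_lim_ext_loc (fun s => PI - asin (sin (al s - th s)))).
    { exists s0. intros y Hy. specialize (Hreg y (Rlt_le _ _ Hy)).
      rewrite <- sin_PI_x. rewrite asin_sin by lra. ring. }
    assert (LL : is_lim (fun s => PI - asin (sin (al s - th s))) m_infty (PI - asin 0)).
    { apply is_lim_minus'. apply is_lim_const.
      apply (cont_lim asin); [|exact Lsb].
      apply derivable_continuous_pt. apply derivable_pt_asin. lra. }
    rewrite asin_0, Rminus_0_r in LL. exact LL. }
  split; [exact Lth|].
  apply (is_lim_ext (fun s => th s + (al s - th s))). { intro y; ring. }
  apply is_lim_plus'; assumption.
Qed.
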